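(* Let $(M,J,g)$ be a $(J^2=\pm1)$-metric manifold with $\alpha\varepsilon=-1$. The following are equivalent: (i) $\widetilde N_J^{-1}=0$; (ii) $(\nabla^g_X\Phi)(Y,Z)-\alpha(\nabla^g_{JX}\Phi)(JY,Z)=0$ for all $X,Y,Z$; (iii) $(\nabla^g_XJ)Y-\alpha(\nabla^g_{JX}J)JY=0$ for all $X,Y$; (iv) $(M,J,g)$ is of quasi-Kähler type, i.e. $(\nabla^g_XJ)JY-(\nabla^g_{JX}J)Y=0$ for all $X,Y$; (v) $(\nabla^g_XJ)X-\alpha(\nabla^g_{JX}J)JX=0$ for all $X$.
   Context: A $(J^2=\pm1)$-metric manifold $(M,J,g)$ is a smooth manifold $M$ with a semi-Riemannian metric $g$ and a $(1,1)$-tensor field $J$ such that $J^2=\alpha\,\mathrm{Id}$, $\mathrm{trace}\,J=0$, $g(JX,JY)=\varepsilon g(X,Y)$ for all vector fields, where $\alpha,\varepsilon\in\{-1,1\}$, and $g$ is Riemannian when $\varepsilon=1$. $\nabla^g$ is the Levi-Civita connection; $\Phi(X,Y)=g(JX,Y)$ is the fundamental tensor. The second Nijenhuis tensor is $\widetilde N_J^{\alpha\varepsilon}(X,Y)=(\nabla^g_XJ)JY+\alpha\varepsilon\big((\nabla^g_{JX}J)Y+(\nabla^g_YJ)JX\big)+(\nabla^g_{JY}J)X$; for $\alpha\varepsilon=-1$ it is denoted $\widetilde N_J^{-1}$. *)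

(* Defs.v *)
(* Algebraic (Koszul-style) model of a semi-Riemannian
   manifold: A = algebra of smooth functions over the reals R,
   V = A-module of vector fields, act X f = X(f), bracket = Lie bracket. *)
From HB Require Import structures.
From mathcomp Require Import all_boot all_order all_algebra.
Set Implicit Arguments. Unset Strict Implicit. Unset Printing Implicit Defensive.
Import Order.TTheory GRing.Theory Num.Theory.
Local Open Scope ring_scope.

Section Geometry.
Variables (R : realFieldType) (A : comAlgType R) (V : lmodType A).
Variables (act : V -> A -> A) (bracket : V -> V -> V).

Definition vector_field_structure : Prop :=
  [/\ (forall (f : A) X Y h, act (f *: X + Y) h = f * act X h + act Y h),
      (forall X (c : R) h1 h2, act X (c *: h1 + h2) = c *: act X h1 + act X h2),
      (forall X h1 h2, act X (h1 * h2) = act X h1 * h2 + h1 * act X h2) &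
      (forall X Y h, act (bracket X Y) h = act X (act Y h) - act Y (act X h))].

Definition semi_riemannian (g : V -> V -> A) : Prop :=
  [/\ (forall (f : A) X Y Z, g (f *: X + Y) Z = f * g X Z + g Y Z),
      (forall X Y, g X Y = g Y X) &
      (forall X, (forall Z, g X Z = 0) -> X = 0)].

Definition J2_metric (g : V -> V -> A) (J : V -> V) (alpha eps : A) : Prop :=
  [/\ alpha = 1 \/ alpha = -1, eps = 1 \/ eps = -1,
      (forall (f : A) X Y, J (f *: X + Y) = f *: J X + J Y),
      (forall X, J (J X) = alpha *: X) &
      (forall X Y, g (J X) (J Y) = eps * g X Y)].

Definition levi_civita (g : V -> V -> A) (nabla : V -> V -> V) : Prop :=
  [/\ (forall (f : A) X Y Z, nabla (f *: X + Y) Z = f *: nabla X Z + nabla Y Z),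
      (forall X Y Z, nabla X (Y + Z) = nabla X Y + nabla X Z),
      (forall (f : A) X Y, nabla X (f *: Y) = act X f *: Y + f *: nabla X Y),
      (forall X Y Z, act X (g Y Z) = g (nabla X Y) Z + g Y (nabla X Z)) &
      (forall X Y, nabla X Y - nabla Y X = bracket X Y)].

Definition nablaJ (nabla : V -> V -> V) (J : V -> V) (X Y : V) : V :=
  nabla X (J Y) - J (nabla X Y).

Definition Phi (g : V -> V -> A) (J : V -> V) (X Y : V) : A := g (J X) Y.

Definition nablaPhi (g : V -> V -> A) (J : V -> V) (nabla : V -> V -> V)
  (X Y Z : V) : A :=
  act X (Phi g J Y Z) - Phi g J (nabla X Y) Z - Phi g J Y (nabla X Z).

Definition N2 (nabla : V -> V -> V) (J : V -> V) (alpha eps : A) (X Y : V) : V :=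
  nablaJ nabla J X (J Y)
  + (alpha * eps) *: (nablaJ nabla J (J X) Y + nablaJ nabla J Y (J X))
  + nablaJ nabla J (J Y) X.

End Geometry.

(* Main.v *)
Require Import Defs.
From HB Require Import structures.
From mathcomp Require Import all_boot all_order all_algebra.
From mathcomp Require Import lra.
Import Order.TTheory GRing.Theory Num.Theory.
Local Open Scope ring_scope.
Lemma two_zero (R : realFieldType) (A : comAlgType R) (V : lmodType A) (v : V) :
  v + v = 0 -> v = 0.
Proof.
move=> h.
have e : ((2^-1 : R) *: (1 : A)) * (1 + 1) = 1.
  rewrite -scalerAl mul1r scalerDr -scalerDl.
  have -> : (2^-1 + 2^-1 : R) = 1 by lra.
  by rewrite scale1r.
by rewrite -[v]scale1r -e -scalerA scalerDl scale1r h scaler0.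
Qed.

Lemma pure (R : realFieldType) (A : comAlgType R) (V : lmodType A)
  (J : V -> V) (D : V -> V -> V) (a : A) :
  a * a = 1 ->
  (forall X Y, J (X + Y) = J X + J Y) ->
  (forall (f : A) X, J (f *: X) = f *: J X) ->
  (forall X, J (J X) = a *: X) ->
  (forall X1 X2 Y, D (X1 + X2) Y = D X1 Y + D X2 Y) ->
  (forall (f : A) X Y, D (f *: X) Y = f *: D X Y) ->
  (forall X Y1 Y2, D X (Y1 + Y2) = D X Y1 + D X Y2) ->
  (forall (f : A) X Y, D X (f *: Y) = f *: D X Y) ->
  (forall X Y, D X (J Y) = - J (D X Y)) ->
  [/\ (forall X Y, D X (J Y) + (-1) *: (D (J X) Y + D Y (J X)) + D (J Y) X = 0)
        <-> (forall X Y, D X (J Y) - D (J X) Y = 0),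
      (forall X Y, D X Y - a *: D (J X) (J Y) = 0)
        <-> (forall X Y, D X (J Y) - D (J X) Y = 0) &
      (forall X Y, D X Y - a *: D (J X) (J Y) = 0)
        <-> (forall X, D X X - a *: D (J X) (J X) = 0)].
Proof.
move=> aa JD JZ JJ DDl DZl DDr DZr DJ.
have JN X : J (- X) = - J X by rewrite -scaleN1r JZ scaleN1r.
have JB X Y : J (X - Y) = J X - J Y by rewrite JD JN.
have J0 : J 0 = 0 by apply/(addrI (J 0)); rewrite -JD !addr0.
have aaV (v : V) : a *: (a *: v) = v by rewrite scalerA aa scale1r.
have JJinv Y : J (a *: J Y) = Y by rewrite JZ JJ aaV.
pose B X Y := D X Y - a *: D (J X) (J Y).
have Bj X Y : B X (J Y) = D X (J Y) - D (J X) Y by rewrite /B JJ DZr aaV.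
have BJl X Y : B (J X) Y = D (J X) Y - D X (J Y) by rewrite /B JJ DZl aaV.
have Ba X Y : B X (J Y) = - B (J X) Y by rewrite Bj BJl opprB.
have Bb X Y : B X (J Y) = - J (B X Y).
  rewrite Bj /B JB JZ !DJ JN JJ !scalerN aaV opprK.
  by rewrite opprD.
have BDl X1 X2 Y : B (X1 + X2) Y = B X1 Y + B X2 Y.
  by rewrite /B JD !DDl scalerDr opprD addrACA.
have BDr X Y1 Y2 : B X (Y1 + Y2) = B X Y1 + B X Y2.
  by rewrite /B JD !DDr scalerDr opprD addrACA.
have BZl f X Y : B (f *: X) Y = f *: B X Y.
  by rewrite /B JZ !DZl scalerBr !scalerA mulrC.
have iv_iii : (forall X Y, B X (J Y) = 0) -> forall X Y, B X Y = 0.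
  by move=> h X Y; have := h X (a *: J Y); rewrite JJinv.
have Bsol X Y : (forall X Y, B X (J Y) = B Y (J X)) -> B X (J Y) = 0.
  move=> sym.
  have QJl : B (J X) (J Y) = J (B X (J Y)) by rewrite Ba JJ BZl Bb JN JJ.
  have e : J (B X (J Y)) + J (B X (J Y)) = 0.
    by rewrite -{1}QJl (sym (J X) Y) Bb (sym Y X) addNr.
  have e2 := two_zero _ _ _ _ e.
  by rewrite -[B X (J Y)]aaV -[a *: B X (J Y)]JJ e2 J0 scaler0.
have Nid X Y : D X (J Y) + (-1) *: (D (J X) Y + D Y (J X)) + D (J Y) X
   = (D X (J Y) - D (J X) Y) - (D Y (J X) - D (J Y) X).
  by rewrite scaleN1r opprD opprB !addrA [in RHS]addrAC.
split.
- split=> h X Y.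
    rewrite -Bj; apply: Bsol => X' Y'; rewrite !Bj; apply/eqP; rewrite -subr_eq0.
    by rewrite -Nid h.
  by rewrite Nid !h subrr.
- split=> h X Y.
    by rewrite -Bj; apply: h.
  by rewrite -/(B X Y); apply: iv_iii => X' Y'; rewrite Bj h.
- split=> h; first by move=> X; apply: h.
  have hB : forall X, B X X = 0 by [].
  have skew X Y : B X Y = - B Y X.
    have := hB (X + Y); rewrite BDl !BDr !hB add0r addr0 => /eqP.
    by rewrite addr_eq0 => /eqP.
  move=> X Y; rewrite -/(B X Y); apply: iv_iii => {}X {}Y.
  apply: two_zero.
  rewrite {1}Ba (skew (J X) Y) opprK Bb (skew Y X) JN opprK.
  by rewrite Bb subrr.
Qed.

Theorem mainTheorem7 (R : realFieldType) (A : comAlgType R) (V : lmodType A)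
  (act : V -> A -> A) (bracket : V -> V -> V)
  (g : V -> V -> A) (J : V -> V) (nabla : V -> V -> V) (alpha eps : A) :
  vector_field_structure act bracket ->
  semi_riemannian g ->
  J2_metric g J alpha eps ->
  levi_civita act bracket g nabla ->
  alpha * eps = -1 ->
  [<-> (forall X Y, N2 nabla J alpha eps X Y = 0);
       (forall X Y Z, nablaPhi act g J nabla X Y Z
                      - alpha * nablaPhi act g J nabla (J X) (J Y) Z = 0);
       (forall X Y, nablaJ nabla J X Y - alpha *: nablaJ nabla J (J X) (J Y) = 0);
       (forall X Y, nablaJ nabla J X (J Y) - nablaJ nabla J (J X) Y = 0);
       (forall X, nablaJ nabla J X X - alpha *: nablaJ nabla J (J X) (J X) = 0)].
Proof.
move=> [actL actR actM actB] [gL gS gN] [ha he JL JJ gJ] [nL nA nLeib nM nT] hae.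
have JD X Y : J (X + Y) = J X + J Y by have := JL 1 X Y; rewrite !scale1r.
have J0 : J 0 = 0 by apply/(addrI (J 0)); rewrite -JD !addr0.
have JZ f X : J (f *: X) = f *: J X by have := JL f X 0; rewrite !addr0 J0 addr0.
have JN X : J (- X) = - J X by rewrite -scaleN1r JZ scaleN1r.
have JB X Y : J (X - Y) = J X - J Y by rewrite JD JN.
have aa : alpha * alpha = 1 by case: ha => ->; rewrite ?mulr1 ?mulrNN ?mulr1.
have nDl X1 X2 Z : nabla (X1 + X2) Z = nabla X1 Z + nabla X2 Z.
  by have := nL 1 X1 X2 Z; rewrite !scale1r.
have n0l Z : nabla 0 Z = 0 by apply/(addrI (nabla 0 Z)); rewrite -nDl !addr0.
have nZl f X Z : nabla (f *: X) Z = f *: nabla X Z.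
  by have := nL f X 0 Z; rewrite !addr0 n0l addr0.
have act00 X : act X 0 = 0.
  by have := actM X 0 0; rewrite !mulr0 !mul0r addr0.
have act1 X : act X 1 = 0.
  have h := actM X 1 1; rewrite !mulr1 mul1r in h.
  by apply/(addrI (act X 1)); rewrite addr0 -h.
have act0 X : act X alpha = 0.
  case: ha => -> //.
  by have := actR X (-1) 1 0; rewrite scaleN1r addr0 scaleN1r act1 oppr0 act00 addr0.
pose D := nablaJ nabla J.
have DDl X1 X2 Y : D (X1 + X2) Y = D X1 Y + D X2 Y.
  by rewrite /D /nablaJ !nDl JD opprD addrACA.
have DZl f X Y : D (f *: X) Y = f *: D X Y.
  by rewrite /D /nablaJ !nZl JZ scalerBr.
have DDr X Y1 Y2 : D X (Y1 + Y2) = D X Y1 + D X Y2.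
  by rewrite /D /nablaJ JD !nA JD opprD addrACA.
have DZr f X Y : D X (f *: Y) = f *: D X Y.
  by rewrite /D /nablaJ JZ !nLeib JD !JZ scalerBr opprD addrACA subrr add0r.
have DJ X Y : D X (J Y) = - J (D X Y).
  by rewrite /D /nablaJ JJ nLeib act0 scale0r add0r JB JJ opprB.
have gDl X Y Z : g (X + Y) Z = g X Z + g Y Z.
  by have := gL 1 X Y Z; rewrite scale1r mul1r.
have g0l Z : g 0 Z = 0 by apply/(addrI (g 0 Z)); rewrite -gDl !addr0.
have gNl X Z : g (- X) Z = - g X Z.
  by have := gL (-1) X 0 Z; rewrite scaleN1r addr0 g0l addr0 mulN1r.
have gBl X Y Z : g (X - Y) Z = g X Z - g Y Z by rewrite gDl gNl.
have gZl f X Z : g (f *: X) Z = f * g X Z.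
  by have := gL f X 0 Z; rewrite addr0 g0l addr0.
have hPhi X Y Z : nablaPhi act g J nabla X Y Z = g (D X Y) Z.
  by rewrite /nablaPhi /Phi nM /D /nablaJ gBl addrAC addrK.
have gii X Y Z : nablaPhi act g J nabla X Y Z
                      - alpha * nablaPhi act g J nabla (J X) (J Y) Z
             = g (D X Y - alpha *: D (J X) (J Y)) Z.
  by rewrite !hPhi [in RHS]gBl gZl.
have [Pi Piii Pv] := @pure R A V J D alpha aa JD JZ JJ DDl DZl DDr DZr DJ.
have ii_iii : (forall X Y Z, nablaPhi act g J nabla X Y Z
                      - alpha * nablaPhi act g J nabla (J X) (J Y) Z = 0) <->
              (forall X Y, D X Y - alpha *: D (J X) (J Y) = 0).
  split=> h X Y; last by move=> Z; rewrite gii h g0l.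
  by apply: gN => Z; rewrite -gii h.
have i_eq : (forall X Y, N2 nabla J alpha eps X Y = 0) <->
   (forall X Y, D X (J Y) + (-1) *: (D (J X) Y + D Y (J X)) + D (J Y) X = 0).
  by split=> h X Y; have := h X Y; rewrite /N2 hae.
split; [|split; [|split; [|split]]].
- move=> h. apply/ii_iii. apply/Piii. apply/Pi. by apply/i_eq.
- by move=> /ii_iii.
- by move=> /Piii.
- by move=> /Piii /Pv.
- move=> /Pv h. apply/i_eq. apply/Pi. by apply/Piii.
Qed.
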